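(* Let $N$ be finite, $\mathbf P$ stochastic on $N$, $0<\beta<1$, $\mathbf R\in\mathbb R^N$, $S\subseteq N$ and $j\in S^c$. Then $a^S_{jj}\neq 0$, and with $T=S^c\setminus\{j\}$: $$\mathbf A^{S\cup\{j\}}_{T,S}=\mathbf A^S_{T,S}-\frac{\mathbf A^S_{T,j}\mathbf A^S_{j,S}}{a^S_{jj}},\qquad \mathbf A^{S\cup\{j\}}_{T,j}=\frac{\mathbf A^S_{T,j}}{a^S_{jj}},$$ $$\mathbf w^{S\cup\{j\}}_S=\mathbf w^S_S+\frac{w^S_j}{a^S_{jj}}\mathbf A^S_{S,j},\qquad w^{S\cup\{j\}}_j=\frac{w^S_j}{a^S_{jj}},\qquad \mathbf w^{S\cup\{j\}}_T=\mathbf w^S_T-\frac{w^S_j}{a^S_{jj}}\mathbf A^S_{T,j},$$ and the same three identities hold with $\mathbf w$ replaced by $\mathbf r$ throughout.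
   Context: $N$ finite, $\mathbf P=(p_{ij})$ stochastic, $\beta\in(0,1)$, $\mathbf R=(R_j)$; submatrices such as $\mathbf A^S_{T,S}$ use row set $T$ and column set $S$, and $a^S_{ij}$ are the entries of $\mathbf A^S$; $S^c=N\setminus S$. Define $$\mathbf P^S=\begin{bmatrix}\mathbf P_{SS}&\mathbf P_{SS^c}\\\mathbf 0&\mathbf I_{S^c}\end{bmatrix},\ \mathbf P^{S^c}=\begin{bmatrix}\mathbf I_S&\mathbf 0\\\mathbf P_{S^cS}&\mathbf P_{S^cS^c}\end{bmatrix},\ \mathbf A^S=(\mathbf I-\beta\mathbf P^{S^c})(\mathbf I-\beta\mathbf P^S)^{-1}.$$ With $X(t)$ the Markov chain with matrix $\mathbf P$, $\mathsf E_i$ expectation given $X(0)=i$, and $\tau_S=\min\{t\ge0:X(t)\notin S\}$: $f_i^S=\mathsf{E}_i[\sum_{t=0}^{\tau_S-1}R_{X(t)}\beta^t]$, $g_i^S=\mathsf{E}_i[\sum_{t=0}^{\tau_S-1}\beta^t]$, $w_i^S=1+\beta\sum_kp_{ik}g_k^S-\beta g_i^S$, $r_i^S=R_i+\beta\sum_kp_{ik}f_k^S-\beta f_i^S$; $\mathbf w^S,\mathbf r^S$ are the column vectors of these, and subscripts denote sub-vectors. *)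

(* Defs.v *)
From HB Require Import structures.
From mathcomp Require Import all_boot all_order all_algebra.
From mathcomp Require Import all_classical all_reals all_analysis.
Set Implicit Arguments. Unset Strict Implicit. Unset Printing Implicit Defensive.
Import Order.TTheory GRing.Theory Num.Theory.
Local Open Scope ring_scope.

Section Defs.
Variables (R : realType) (n : nat).
Implicit Types (P : 'M[R]_n) (S : {set 'I_n}) (beta : R) (Rw : 'I_n -> R).

Definition stochastic P :=
  (forall i k, 0 <= P i k) /\ (forall i, \sum_(k < n) P i k = 1).

Definition PS P S : 'M[R]_n :=
  \matrix_(i, k) (if i \in S then P i k else (i == k)%:R).

Definition PSc P S : 'M[R]_n :=
  \matrix_(i, k) (if i \in S then (i == k)%:R else P i k).

Definition Amx P beta S : 'M[R]_n :=
  (1%:M - beta *: PSc P S) *m invmx (1%:M - beta *: PS P S).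

(* E_i[ R_{X(t)} 1{t < tau_S} ] for the chain started at i: sum over all
   paths x(0)=i, x(1),...,x(t) of their probability, restricted to paths that
   stay in S up to time t (this is exactly the event t < tau_S). *)
Definition killed_term P S Rw (i : 'I_n) (t : nat) : R :=
  \sum_(x : {ffun 'I_t.+1 -> 'I_n} | (x ord0 == i) && [forall s, x s \in S])
    (\prod_(s < t) P (x (widen_ord (leqnSn t) s)) (x (lift ord0 s)))
      * Rw (x ord_max).

(* f_i^S = E_i[ sum_{t=0}^{tau_S - 1} R_{X(t)} beta^t ] *)
Definition fS P beta S Rw (i : 'I_n) : R :=
  limn (fun m => \sum_(0 <= t < m) beta ^+ t * killed_term P S Rw i t).

Definition gS P beta S (i : 'I_n) : R := fS P beta S (fun _ => 1) i.

Definition wS P beta S (i : 'I_n) : R :=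
  1 + beta * \sum_(k < n) P i k * gS P beta S k - beta * gS P beta S i.

Definition rS P beta S Rw (i : 'I_n) : R :=
  Rw i + beta * \sum_(k < n) P i k * fS P beta S Rw k - beta * fS P beta S Rw i.

End Defs.

(* Main.v *)
Require Import Defs.
From HB Require Import structures.
From mathcomp Require Import all_boot all_order all_algebra.
From mathcomp Require Import all_classical all_reals all_analysis.
From mathcomp Require Import ring lra.
Import Order.TTheory GRing.Theory Num.Theory.
Local Open Scope ring_scope.

Module Aux.
Set Implicit Arguments. Unset Strict Implicit.

Section Comb.
Variables (R : realType) (n : nat) (P : 'M[R]_n) (S : {set 'I_n}) (Rw : 'I_n -> R).

Lemma kt0 i : killed_term P S Rw i 0 = (i \in S)%:R * Rw i.
Proof.
rewrite /killed_term.
case: (boolP (i \in S)) => iS.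
- rewrite (big_pred1 [ffun=> i]).
  + by rewrite big_ord0 mul1r ffunE mul1r.
  + move=> x /=. apply/idP/eqP.
     * case/andP=> /eqP xi _; apply/ffunP=> s; by rewrite ffunE (ord1 s).
     * move=> ->; rewrite ffunE eqxx /=; apply/forallP=> s; by rewrite ffunE.
- rewrite big_pred0 ?mul0r // => x; apply/negbTE/negP => /andP[/eqP xi /forallP/(_ ord0)].
  by rewrite xi; apply/negP.
Qed.

Lemma ktS i t : killed_term P S Rw i t.+1 =
  (i \in S)%:R * \sum_k P i k * killed_term P S Rw k t.
Proof.
pose h (y : {ffun 'I_t.+1 -> 'I_n}) : {ffun 'I_t.+2 -> 'I_n} :=
  [ffun s => if unlift ord0 s is Some s' then y s' else i].
pose h' (x : {ffun 'I_t.+2 -> 'I_n}) : {ffun 'I_t.+1 -> 'I_n} :=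
  [ffun s => x (lift ord0 s)].
have h0 y : h y ord0 = i by rewrite ffunE unlift_none.
have hl y s : h y (lift ord0 s) = y s by rewrite ffunE liftK.
rewrite /killed_term (reindex_onto h h') /=; last first.
  move=> x /andP[/eqP xi _]; apply/ffunP=> s; rewrite ffunE.
  case: (unliftP ord0 s) => [s'|] -> ; first by rewrite ffunE.
  by rewrite xi.
have h'h y : h' (h y) = y by apply/ffunP=> s; rewrite ffunE hl.
under eq_bigl => y do rewrite h'h eqxx andbT h0 eqxx /=.
case: (boolP (i \in S)) => iS; last first.
  rewrite mul0r big_pred0 // => y; apply/negbTE/negP=> /forallP/(_ ord0).
  by rewrite h0; apply/negP.
rewrite mul1r.
have hS : forall y, [forall s, h y s \in S] = [forall s, y s \in S].
  move=> y; apply/forallP/forallP => H s.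
    by rewrite -hl.
  case: (unliftP ord0 s) => [s'|] ->; first by rewrite hl.
  by rewrite h0.
under eq_bigl => y do rewrite hS.
rewrite (partition_big (fun y : {ffun 'I_t.+1 -> 'I_n} => y ord0) xpredT) //=.
apply: eq_bigr => k _; rewrite big_distrr /=; apply: eq_big => [y|y /andP[yS /eqP yk]]; first by rewrite andbC.
rewrite big_ord_recl.
have -> : widen_ord (leqnSn t.+1) ord0 = ord0 :> 'I_t.+2 by apply: val_inj.
rewrite h0 hl yk mulrA; congr (_ * _ * _).
  apply: eq_bigr => s _.
  have -> : widen_ord (leqnSn t.+1) (lift ord0 s) = lift ord0 (widen_ord (leqnSn t) s).
    by apply: val_inj.
  by rewrite !hl.
have -> : (ord_max : 'I_t.+2) = lift ord0 (ord_max : 'I_t.+1) by apply: val_inj.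
by rewrite hl.
Qed.
End Comb.

Section Inv.
Variables (R : realType) (n : nat).

Lemma unit_IQ (Q : 'M[R]_n) (b : R) : (forall i k, 0 <= Q i k) ->
  (forall i, \sum_k Q i k <= 1) -> 0 <= b -> b < 1 -> (1%:M - b *: Q) \in unitmx.
Proof.
move=> Q0 Q1 b0 b1.
have key : forall v : 'rV[R]_n, v *m (1%:M - b *: Q)^T = 0 -> v = 0.
  move=> v Hv.
  have Hi : forall i, v 0 i = b * \sum_k Q i k * v 0 k.
    move=> i; move: Hv; rewrite linearB /= trmx1 mulmxBr mulmx1 linearZ /= -scalemxAr.
    move/eqP; rewrite subr_eq0 => /eqP /matrixP /(_ 0 i); rewrite !mxE => ->.
    congr (_ * _); apply: eq_bigr => k _; rewrite mxE mulrC //.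
  clear Hv; case: (pickP (fun _ : 'I_n => true)) => [i0 _|none]; last first.
    by apply/matrixP => a k; have := none k.
  case: (@arg_maxP _ _ _ i0 xpredT (fun k => `|v 0 k|) isT) => i _ Hm.
  have : `|v 0 i| <= b * `|v 0 i|.
    rewrite {1}Hi normrM ger0_norm //; apply: ler_wpM2l => //.
    apply: le_trans (ler_norm_sum _ _ _) _.
    apply: le_trans (_ : \sum_k Q i k * `|v 0 i| <= _).
      apply: ler_sum => k _; rewrite normrM ger0_norm //; apply: ler_wpM2l => //.
      exact: Hm.
    by rewrite -mulr_suml ler_piMl.
  move=> H.
  have vi0 : `|v 0 i| = 0.
    apply/eqP; rewrite eq_le normr_ge0 andbT.
    have : (1 - b) * `|v 0 i| <= 0 by rewrite mulrBl mul1r subr_le0.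
    by rewrite pmulr_rle0 // subr_gt0.
  apply/rowP => k; rewrite mxE; apply/eqP; rewrite -normr_eq0 eq_le normr_ge0 andbT -vi0.
  exact: Hm.
rewrite -unitmx_tr -row_free_unit -kermx_eq0.
apply/eqP/row_matrixP => i; rewrite row0.
apply: key; apply/sub_kermxP; exact: row_sub.
Qed.
End Inv.

Module FSmod.
Import numFieldNormedType.Exports.
Local Open Scope classical_set_scope.

Section FS.
Variables (R : realType) (n : nat) (P : 'M[R]_n) (S : {set 'I_n}) (Rw : 'I_n -> R) (beta : R).
Hypotheses (HP : stochastic P) (b0 : 0 < beta) (b1 : beta < 1).

Let ps m i := \sum_(0 <= t < m) beta ^+ t * killed_term P S Rw i t.

Lemma psS m i : ps m.+1 i = (i \in S)%:R * (Rw i + beta * \sum_k P i k * ps m k).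
Proof.
rewrite /ps big_nat_recl // expr0 mul1r kt0 mulrDr; congr (_ + _).
under eq_bigr => t _ do rewrite ktS exprS mulrCA -mulrA.
rewrite -mulr_sumr; congr (_ * _); rewrite -mulr_sumr; congr (_ * _).
under eq_bigr => t _ do rewrite mulr_sumr.
rewrite exchange_big /=; apply: eq_bigr => k _; rewrite mulr_sumr.
by apply: eq_bigr => t _; rewrite mulrCA.
Qed.

Lemma fS_eq i : fS P beta S Rw i =
  (i \in S)%:R * (Rw i + beta * \sum_k P i k * fS P beta S Rw k).
Proof.
case: HP => P0 P1.
pose Q : 'M[R]_n := \matrix_(i, k) ((i \in S)%:R * P i k).
have Bu : (1%:M - beta *: Q) \in unitmx.
  apply: unit_IQ => [i1 k|i1||//]; last exact: ltW.
    by rewrite mxE mulr_ge0 // ler0n.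
  under eq_bigr => k _ do rewrite mxE.
  by rewrite -mulr_sumr P1 mulr1; case: (_ \in _).
pose c : 'cV[R]_n := \col_i ((i \in S)%:R * Rw i).
pose fs := invmx (1%:M - beta *: Q) *m c.
have Hf : forall i, fs i 0 = (i \in S)%:R * (Rw i + beta * \sum_k P i k * fs k 0).
  move=> i'; have := mulKVmx Bu c; rewrite -/fs mulmxBl mul1mx -scalemxAl.
  move/eqP; rewrite subr_eq => /eqP /matrixP /(_ i' 0); rewrite !mxE => ->.
  rewrite mulrDr; congr (_ + _); rewrite mulrCA; congr (_ * _); rewrite mulr_sumr.
  by apply: eq_bigr => k _; rewrite !mxE mulrA.
pose C := \sum_k `|fs k 0|.
have bound : forall m i, `|ps m i - fs i 0| <= beta ^+ m * C.
  elim=> [|m IH] i'.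
    rewrite /ps big_geq // sub0r normrN expr0 mul1r /C (bigD1 i') //= lerDl.
    exact: sumr_ge0.
  rewrite psS Hf.
  have -> : forall a x y z w : R, a * (x + y * z) - a * (x + y * w) = a * (y * (z - w)).
    by move=> *; ring.
  rewrite -sumrB normrM; apply: le_trans (_ : 1 * _ <= _).
    apply: ler_wpM2r => //.
    by case: (i' \in S); rewrite ?normr1 ?normr0.
  rewrite mul1r normrM (ger0_norm (ltW b0)) exprS -mulrA; apply: ler_wpM2l; first exact: ltW.
  apply: le_trans (ler_norm_sum _ _ _) _.
  apply: le_trans (_ : \sum_k P i' k * (beta ^+ m * C) <= _).
    apply: ler_sum => k _; rewrite -mulrBr normrM ger0_norm //; apply: ler_wpM2l => //.
  by rewrite -mulr_suml P1 mul1r.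
have gC : (beta ^+ m * C) @[m --> \oo] --> (0 : R).
  rewrite -(mul0r C); apply: cvgMl; apply: cvg_expr.
  by rewrite ger0_norm ?ltW.
have lim_ps : forall i, ps m i @[m --> \oo] --> fs i 0.
  move=> i'.
  apply: (@squeeze_cvgr _ _ _ _ (fun m => fs i' 0 - beta ^+ m * C) (fun m => fs i' 0 + beta ^+ m * C)).
  - apply: nearW => m; have := bound m i'; rewrite ler_distl. by [].
  - rewrite -[X in _ --> X](subr0 (fs i' 0)); exact: (cvgB (cvg_cst _) gC).
  - rewrite -[X in _ --> X](addr0 (fs i' 0)); exact: (cvgD (cvg_cst _) gC).
have E : forall i, fS P beta S Rw i = fs i 0.
  move=> i'; rewrite /fS; apply: cvg_lim => //; exact: lim_ps.
rewrite !E Hf; congr (_ * (_ + _ * _)); apply: eq_bigr => k _; by rewrite E.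
Qed.
End FS.

End FSmod.
Import FSmod.

Section Main.
Variables (R : realType) (n : nat) (P : 'M[R]_n) (beta : R).
Hypotheses (HP : stochastic P) (b0 : 0 < beta) (b1 : beta < 1).

Definition Mm (S : {set 'I_n}) : 'M[R]_n := 1%:M - beta *: PS P S.
Definition Nm (S : {set 'I_n}) : 'M[R]_n := 1%:M - beta *: PSc P S.

Lemma sumdelta (i : 'I_n) (x : 'I_n -> R) : \sum_k (i == k)%:R * x k = x i.
Proof.
rewrite (bigD1 i) //= eqxx mul1r big1 ?addr0 // => k /negbTE.
by rewrite eq_sym => ->; rewrite mul0r.
Qed.


Lemma sumdeltar (i : 'I_n) (x : 'I_n -> R) : \sum_k x k * (k == i)%:R = x i.
Proof.
rewrite -(sumdelta i x); apply: eq_bigr => k _; by rewrite mulrC eq_sym.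
Qed.

Lemma MmE S i k : Mm S i k =
  if i \in S then (i == k)%:R - beta * P i k else (1 - beta) * (i == k)%:R.
Proof. by rewrite !mxE; case: ifP => _ //; rewrite mulrBl mul1r. Qed.

Lemma NmE S i k : Nm S i k =
  if i \in S then (1 - beta) * (i == k)%:R else (i == k)%:R - beta * P i k.
Proof. by rewrite !mxE; case: ifP => _ //; rewrite mulrBl mul1r. Qed.

Lemma Kmul (x : 'I_n -> R) i :
  \sum_k ((i == k)%:R - beta * P i k) * x k = x i - beta * \sum_k P i k * x k.
Proof.
under eq_bigr => k _ do rewrite mulrBl.
by rewrite sumrB sumdelta mulr_sumr; congr (_ - _); apply: eq_bigr => k _; rewrite mulrA.
Qed.

Lemma Dmul (x : 'I_n -> R) i :
  \sum_k (1 - beta) * (i == k)%:R * x k = (1 - beta) * x i.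
Proof. by rewrite -sumdelta mulr_sumr; apply: eq_bigr => k _; rewrite mulrA. Qed.

Lemma Mm_mul S (X : 'cV[R]_n) i : (Mm S *m X) i 0 =
  if i \in S then X i 0 - beta * \sum_k P i k * X k 0 else (1 - beta) * X i 0.
Proof.
rewrite mxE; under eq_bigr => k _ do rewrite MmE.
by case: ifP => _; rewrite ?Kmul ?Dmul.
Qed.

Lemma Nm_mul S (X : 'cV[R]_n) i : (Nm S *m X) i 0 =
  if i \in S then (1 - beta) * X i 0 else X i 0 - beta * \sum_k P i k * X k 0.
Proof.
rewrite mxE; under eq_bigr => k _ do rewrite NmE.
by case: ifP => _; rewrite ?Kmul ?Dmul.
Qed.

Lemma Mu S : Mm S \in unitmx.
Proof.
case: HP => P0 P1.
apply: unit_IQ => [i k|i||//].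
- by rewrite mxE; case: ifP => _ //; rewrite ler0n.
- under eq_bigr => k _ do rewrite mxE.
  case: (i \in S); first by rewrite P1.
  by rewrite (eq_bigr (fun k => (i == k)%:R * 1)) ?(sumdelta i (fun _ => 1)) // => k _; rewrite mulr1.
- exact: ltW.
Qed.

Variables (Rw : 'I_n -> R) (S : {set 'I_n}) (j : 'I_n).
Hypothesis jS : j \notin S.

Let S' := j |: S.

Lemma EM i k : Mm S' i k = Mm S i k + (i == j)%:R * (Nm S j k - Mm S j k).
Proof.
rewrite !MmE NmE (negbTE jS) in_setU1 /=.
case: (eqVneq i j) => [->|ij] /=; first by rewrite (negbTE jS); ring.
by rewrite mul0r addr0.
Qed.

Lemma EN i k : Nm S' i k = Nm S i k - (i == j)%:R * (Nm S j k - Mm S j k).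
Proof.
rewrite !NmE MmE (negbTE jS) in_setU1 /=.
case: (eqVneq i j) => [->|ij] /=; first by rewrite (negbTE jS); ring.
by rewrite mul0r subr0.
Qed.

Lemma EMc (X : 'cV[R]_n) i : (Mm S' *m X) i 0 =
  (Mm S *m X) i 0 + (i == j)%:R * ((Nm S *m X) j 0 - (Mm S *m X) j 0).
Proof.
rewrite !mxE; under eq_bigr => k _ do rewrite EM mulrDl.
rewrite big_split /=; congr (_ + _); rewrite -sumrB mulr_sumr.
by apply: eq_bigr => k _; rewrite -mulrBl mulrA.
Qed.

Lemma EMr (x : 'rV[R]_n) k : (x *m Mm S') 0 k =
  (x *m Mm S) 0 k + x 0 j * (Nm S j k - Mm S j k).
Proof.
rewrite [in LHS]mxE [(x *m Mm S) 0 k]mxE; under eq_bigr => i _ do rewrite EM mulrDr.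
rewrite big_split /=; congr (_ + _).
rewrite (bigD1 j) //= eqxx mul1r big1 ?addr0 // => i /negbTE ->; by rewrite mul0r mulr0.
Qed.


Local Notation A := (Amx P beta S).

Lemma AM T : Amx P beta T *m Mm T = Nm T.
Proof. exact: (mulmxKV (Mu T) (Nm T)). Qed.

Let e : 'cV[R]_n := \col_i (i == j)%:R.
Let v := invmx (Mm S) *m e.

Lemma Mv : Mm S *m v = e.
Proof. exact: (mulKVmx (Mu S) e). Qed.

Lemma Nv : Nm S *m v = A *m e.
Proof. by rewrite /v mulmxA. Qed.

Lemma ee i : e i 0 = (i == j)%:R.
Proof. by rewrite mxE. Qed.

Lemma Ae i : (A *m e) i 0 = A i j.
Proof. rewrite mxE; under eq_bigr => k _ do rewrite ee; exact: sumdeltar. Qed.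

Lemma vS i : i \in S -> (1 - beta) * v i 0 = A i j.
Proof. by move=> iS; rewrite -Ae -Nv Nm_mul iS. Qed.

Lemma vj : (1 - beta) * v j 0 = 1.
Proof. by have := Mm_mul S v j; rewrite (negbTE jS) Mv ee eqxx => <-. Qed.

Lemma vT i : i \notin S -> i != j -> v i 0 = 0.
Proof.
move=> iS ij; have := Mm_mul S v i; rewrite (negbTE iS) Mv ee (negbTE ij) => /esym/eqP.
rewrite mulf_eq0 => /orP[|/eqP//]; rewrite subr_eq0 => /eqP b1'.
by move: b1; rewrite -b1' ltxx.
Qed.

Lemma vA i : i \notin S -> A i j = v i 0 - beta * \sum_k P i k * v k 0.
Proof. by move=> iS; rewrite -Ae -Nv Nm_mul (negbTE iS). Qed.

Lemma Ajj : A j j != 0.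
Proof.
apply/negP => /eqP A0.
have M'v : Mm S' *m v = 0.
  apply/matrixP => i c; rewrite (ord1 c) EMc Mv Nv Ae !ee A0 [RHS]mxE eqxx.
  by case: (eqVneq i j) => _ /=; ring.
have v0 : v = 0 by rewrite -(mulKmx (Mu S') v) M'v mulmx0.
have := Mv; rewrite v0 mulmx0 => /matrixP /(_ j 0); rewrite ee eqxx mxE => /eqP.
by rewrite eq_sym oner_eq0.
Qed.

Lemma A'row t k : t != j ->
  Amx P beta S' t k = A t k - A t j / A j j * (A j k - (j == k)%:R).
Proof.
move=> tj.
suff : row t (Amx P beta S') = \row_k (A t k - A t j / A j j * (A j k - (j == k)%:R)).
  move/rowP/(_ k); move: (Amx P beta S') (Amx P beta S) => X Y.
  by rewrite !mxE.
pose c := A t j / A j j.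
pose y : 'rV[R]_n := \row_k (A t k - c * (A j k - (j == k)%:R)).
rewrite -/c -/y.
apply: (can_inj (mulmxK (Mu S'))).
apply/rowP => k'.
rewrite -row_mul AM EMr.
have yj : y 0 j = A t j - c * (A j j - 1) by rewrite mxE eqxx.
have yE : y = row t A - c *: (row j A - row j 1%:M).
  by apply/rowP => i; rewrite !mxE.
rewrite yj yE mulmxBl -scalemxAl mulmxBl -!row_mul AM mul1mx.
have := Ajj; rewrite /c.
move: (Nm S) (Mm S) (Nm S') (EN t k') (A t j) (A j j) => N M N' EN' atj ajj ajj0.
rewrite !mxE EN' (negbTE tj) mul0r subr0.
by field.
Qed.

Lemma fSz (T : {set 'I_n}) i : i \notin T -> fS P beta T Rw i = 0.
Proof. by move=> iT; rewrite (fS_eq _ _ HP b0 b1 i) (negbTE iT) mul0r. Qed.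

Lemma rS_in (T : {set 'I_n}) i : i \in T -> rS P beta T Rw i = (1 - beta) * fS P beta T Rw i.
Proof.
move=> iT; have := fS_eq T Rw HP b0 b1 i; rewrite iT mul1r => H.
rewrite /rS; set F := fS P beta T Rw i in H *.
by rewrite H; ring.
Qed.

Lemma rS_out (T : {set 'I_n}) i : i \notin T ->
  rS P beta T Rw i = Rw i + beta * \sum_k P i k * fS P beta T Rw k.
Proof. by move=> iT; rewrite /rS fSz // mulr0 subr0. Qed.

Let fc (T : {set 'I_n}) : 'cV[R]_n := \col_i fS P beta T Rw i.
Let dc (T : {set 'I_n}) : 'cV[R]_n := \col_i ((i \in T)%:R * Rw i).

Lemma Mf (T : {set 'I_n}) : Mm T *m fc T = dc T.
Proof.
apply/matrixP => i c; rewrite (ord1 c) Mm_mul.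
under eq_bigr => k _ do rewrite mxE.
rewrite !mxE; case: (boolP (i \in T)) => iT.
  by rewrite (fS_eq _ _ HP b0 b1 i) iT !mul1r addrK.
by rewrite (fS_eq _ _ HP b0 b1 i) (negbTE iT) !mul0r mulr0.
Qed.

Let cc := rS P beta S Rw j / A j j.

Lemma f'E i : fS P beta S' Rw i = fS P beta S Rw i + cc * v i 0.
Proof.
pose g := fc S + cc *: v.
have Hg : Mm S' *m g = dc S'.
  apply/matrixP => i' c0; rewrite (ord1 c0) EMc.
  rewrite !mulmxDr -!scalemxAr Mf Mv Nv.
  rewrite [(_ + cc *: (A *m e)) j 0]mxE [(cc *: (A *m e)) j 0]mxE Ae Nm_mul (negbTE jS).
  have hc : cc * A j j = rS P beta S Rw j by rewrite /cc divfK // Ajj.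
  rewrite rS_out // in hc.
  rewrite hc !mxE in_setU1 fSz // (negbTE jS) eqxx /=.
  under eq_bigr => k _ do rewrite [fc S k 0]mxE.
  case: (eqVneq i' j) => [->|_] /=; last by ring.
  rewrite (negbTE jS) /= mul0r mul1r; ring.
have : fc S' = g by rewrite -(mulKmx (Mu S') (fc S')) -(mulKmx (Mu S') g) Mf Hg.
by move/matrixP/(_ i 0); rewrite !mxE.
Qed.

Lemma r'S s : s \in S ->
  rS P beta S' Rw s = rS P beta S Rw s + rS P beta S Rw j / A j j * A s j.
Proof.
move=> sS; rewrite rS_in ?in_setU1 ?sS ?orbT // rS_in // f'E -(vS sS) /cc; ring.
Qed.

Lemma r'j : rS P beta S' Rw j = rS P beta S Rw j / A j j.
Proof.
by rewrite rS_in ?setU11 // f'E fSz // add0r mulrCA vj mulr1 /cc.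
Qed.

Lemma r'T t : t \notin S -> t != j ->
  rS P beta S' Rw t = rS P beta S Rw t - rS P beta S Rw j / A j j * A t j.
Proof.
move=> tS tj.
have tS' : t \notin S' by rewrite in_setU1 negb_or tj tS.
rewrite (rS_out tS') (rS_out tS) (vA tS) vT //.
under eq_bigr => k _ do rewrite f'E mulrDr.
rewrite big_split /=.
have -> : \sum_k P t k * (cc * v k 0) = cc * \sum_k P t k * v k 0.
  by rewrite mulr_sumr; apply: eq_bigr => k _; rewrite mulrCA.
rewrite /cc; ring.
Qed.

End Main.


End Aux.
Import Aux.
Unset Implicit Arguments.

Theorem mainTheorem9 (R : realType) (n : nat) (P : 'M[R]_n) (beta : R)
  (Rw : 'I_n -> R) (S : {set 'I_n}) (j : 'I_n) :
  stochastic P -> 0 < beta -> beta < 1 -> j \notin S ->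
  let A := Amx P beta S in
  let A' := Amx P beta (j |: S) in
  let T := [set t | (t \notin S) && (t != j)] in
  A j j != 0 /\
  (forall t s, t \in T -> s \in S -> A' t s = A t s - A t j * A j s / A j j) /\
  (forall t, t \in T -> A' t j = A t j / A j j) /\
  (* identities for w *)
  (forall s, s \in S ->
     wS P beta (j |: S) s = wS P beta S s + wS P beta S j / A j j * A s j) /\
  wS P beta (j |: S) j = wS P beta S j / A j j /\
  (forall t, t \in T ->
     wS P beta (j |: S) t = wS P beta S t - wS P beta S j / A j j * A t j) /\
  (* identities for r *)
  (forall s, s \in S ->
     rS P beta (j |: S) Rw s = rS P beta S Rw s + rS P beta S Rw j / A j j * A s j) /\
  rS P beta (j |: S) Rw j = rS P beta S Rw j / A j j /\
  (forall t, t \in T ->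
     rS P beta (j |: S) Rw t = rS P beta S Rw t - rS P beta S Rw j / A j j * A t j).
Proof.
move=> HP b0 b1 jS A A' T.
have Hjj := Ajj HP b0 b1 jS.
split; first exact: Hjj.
split.
  move=> t s; rewrite inE => /andP[tS tj] sS.
  have sj : (j == s) = false by apply/negbTE/eqP => js; move: jS; rewrite js sS.
  rewrite /A' (A'row HP b0 b1 jS) // sj subr0 -/A; ring.
split.
  move=> t; rewrite inE => /andP[tS tj].
  rewrite /A' (A'row HP b0 b1 jS) // eqxx -/A /=.
  by field.
split; first by move=> s sS; exact: (r'S HP b0 b1 (fun _ => 1) jS sS).
split; first exact: (r'j HP b0 b1 (fun _ => 1) jS).
split.
  move=> t; rewrite inE => /andP[tS tj]; exact: (r'T HP b0 b1 (fun _ => 1) jS tS tj).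
split; first by move=> s sS; exact: (r'S HP b0 b1 Rw jS sS).
split; first exact: (r'j HP b0 b1 Rw jS).
move=> t; rewrite inE => /andP[tS tj]; exact: (r'T HP b0 b1 Rw jS tS tj).
Qed.
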